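(* Assume $p,q\in[0,1]$. Let $n\ge3$. If $v\in I_n$ has $k^{(r)}_v>0$, then there exists $u\in\alpha_3(v)$ and there exist $\tilde a,\tilde b,\tilde c,\tilde d$ with $\tilde a\overset m\sim\tilde b$, $\tilde c\overset m\sim\tilde d$ and $u\in\tilde\alpha(\tilde a)\cap\tilde\alpha(\tilde b)\cap\tilde\alpha(\tilde c)\cap\tilde\alpha(\tilde d)$, such that either $\tilde a,\tilde b,\tilde c,\tilde d\in\tilde I_n$ with $\tilde a,\tilde b,\tilde d$ distinct, or $\tilde a,\tilde b\in\tilde I_{n-1}$ and $\tilde c,\tilde d\in\tilde I_n$.
   Context: Ulam–Harris labels: $\mathcal U_n=\mathbb N^n$ ($n\ge0$, $\mathcal U_0=\{\emptyset\}$), $\mathcal U=\bigcup_{n\ge0}\mathcal U_n$; for $u=u_1\dots u_k$ write $ui=u_1\dots u_ki$. Let $(\xi_u)_{u\in\mathcal U}$ be i.i.d. Poisson with mean $1+p$, and $(\delta_{u,v})_{u,v\in\mathcal U}$, $(\mu_{\{u,v\}})_{u\ne v\in\mathcal U}$ i.i.d. Bernoulli with mean $q$, all independent. The process $\mathcal G(p,q)=(G_n)_{n\ge0}$, $G_n=(V_n,E_n)$: $G_0=(\{\emptyset\},\emptyset)$, and $I_m=V_m\cap\mathcal U_m$. Given $G_{n-1}$ ($n\ge1$): (1) for $u\in I_{n-1}$ let $\mathcal K_u=\{v\in V_{n-1}:d_{G_{n-1}}(u,v)=3\}$ and $\mathcal C_u=\{j\in\mathbb N:j\le\xi_u,\ \delta_{v,uj}=0\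 \forall v\in\mathcal K_u\}$; let $\tilde G_n$ have vertex set $V_{n-1}\cup\{ui:u\in I_{n-1},i\in\mathcal C_u\}$ and edge set $E_{n-1}\cup\{\{u,ui\}:u\in I_{n-1},i\in\mathcal C_u\}$, and $\tilde I_n$ its set of vertices in $\mathcal U_n$. (2) For $u,v\in\tilde I_n$ write $u\overset{m}{\sim}v$ iff $d_{\tilde G_n}(u,v)=4$ and $\mu_{\{u,v\}}=1$; let $\sim$ be the equivalence relation on $\tilde I_n$ generated by $\overset m\sim$, and $\pi(u)$ the lexicographically smallest element of the class of $u$. Then $V_n=V_{n-1}\cup\{\pi(u):u\in\tilde I_n\}$, $E_n=E_{n-1}\cup\{\{v,\pi(vi)\}:v\in I_{n-1},i\in\mathcal C_v\}$. (The relation $\overset m\sim$ is defined on each $\tilde I_m$, $m\ge1$, separately.) For $x\in I_n$, $\alpha(x)=\bigcup_{0\le j\le n}\{y\in I_{n-j}:d_{G_n}(y,x)=j\}$ and $\alpha_i(x)=\alpha(x)\cap I_{n-i}$. For $\tilde x\in\tilde I_m$, $\tilde\alpha(\tilde x)=\{\tilde x\}\cup\bigcup_{1\le j\le m}\{y\in I_{m-j}:d_{\tilde G_m}(y,\tilde x)=j\}$. For $x\in I_n$, $k^{(r)}_x=|\{y\in I_{n-1}:\alpha_1(y)\cap\alpha_2(x)=\emptyset,\ d_{G_n}(x,y)=3\}|$. *)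

(* Defs.v *)
(* Deterministic description of the process G(p,q), given an
   arbitrary realisation of the random variables xi, delta, mu. *)
From Stdlib Require Import Reals Arith List Relations.
Import ListNotations.

(* Ulam-Harris labels: u = u_1 ... u_k as a list of naturals; ui = u ++ [i]. *)
Definition lab := list nat.

(* A graph with (possibly infinite-described, but here finite) vertex and edge
   predicates; the edge relation is kept symmetric by construction. *)
Record graph := mkGraph { gV : lab -> Prop; gE : lab -> lab -> Prop }.

Fixpoint walk (E : lab -> lab -> Prop) (k : nat) (u v : lab) : Prop :=
  match k with
  | 0 => u = v
  | S k' => exists w, E u w /\ walk E k' w v
  end.

Definition dist (G : graph) (u v : lab) (m : nat) : Prop :=
  walk (gE G) m u v /\ forall k, k < m -> ~ walk (gE G) k u v.

Definition lvl (G : graph) (m : nat) (x : lab) : Prop := gV G x /\ length x = m.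

Fixpoint lex_le (s t : lab) : bool :=
  match s, t with
  | [], _ => true
  | _ :: _, [] => false
  | a :: s', b :: t' => Nat.ltb a b || (Nat.eqb a b && lex_le s' t')
  end.

Definition Cset (xi : lab -> nat) (delta : lab -> lab -> bool)
  (G : graph) (u : lab) (i : nat) : Prop :=
  1 <= i <= xi u /\
  forall v, gV G v -> dist G u v 3 -> delta v (u ++ [i]) = false.

(* \tilde G_{m+1} built from G = G_m *)
Definition tilde (xi : lab -> nat) (delta : lab -> lab -> bool)
  (G : graph) (m : nat) : graph :=
  mkGraph
    (fun x => gV G x \/ exists u i, lvl G m u /\ Cset xi delta G u i /\ x = u ++ [i])
    (fun x y => gE G x y \/
       exists u i, lvl G m u /\ Cset xi delta G u i /\
         ((x = u /\ y = u ++ [i]) \/ (x = u ++ [i] /\ y = u))).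

Definition msimG (mu : lab -> lab -> bool) (Gt : graph) (n : nat) (a b : lab) : Prop :=
  lvl Gt n a /\ lvl Gt n b /\ dist Gt a b 4 /\ mu a b = true.

Definition is_pi (mu : lab -> lab -> bool) (Gt : graph) (n : nat) (u w : lab) : Prop :=
  clos_refl_sym_trans lab (msimG mu Gt n) u w /\
  forall w', clos_refl_sym_trans lab (msimG mu Gt n) u w' -> lex_le w w' = true.

(* G_n from G = G_{n-1}, Gt = \tilde G_n *)
Definition final (xi : lab -> nat) (delta : lab -> lab -> bool) (mu : lab -> lab -> bool)
  (G Gt : graph) (n : nat) : graph :=
  mkGraph
    (fun x => gV G x \/ exists u, lvl Gt n u /\ is_pi mu Gt n u x)
    (fun x y => gE G x y \/
       exists v i w, lvl G (n - 1) v /\ Cset xi delta G v i /\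
         is_pi mu Gt n (v ++ [i]) w /\ ((x = v /\ y = w) \/ (x = w /\ y = v))).

Fixpoint proc xi delta mu (n : nat) : graph :=
  match n with
  | 0 => mkGraph (fun x => x = []) (fun _ _ => False)
  | S m => final xi delta mu (proc xi delta mu m) (tilde xi delta (proc xi delta mu m) m) (S m)
  end.

(* \tilde G_n (meaningful for n >= 1) *)
Definition Gtil xi delta mu (n : nat) : graph :=
  tilde xi delta (proc xi delta mu (n - 1)) (n - 1).

Definition Iset xi delta mu (n : nat) (x : lab) : Prop := lvl (proc xi delta mu n) n x.
Definition Itil xi delta mu (n : nat) (x : lab) : Prop := lvl (Gtil xi delta mu n) n x.

Definition msim xi delta mu (n : nat) (a b : lab) : Prop :=
  msimG mu (Gtil xi delta mu n) n a b.

Definition alpha xi delta mu (n i : nat) (x y : lab) : Prop :=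
  Iset xi delta mu (n - i) y /\ dist (proc xi delta mu n) y x i.

Definition atilde xi delta mu (m : nat) (x y : lab) : Prop :=
  y = x \/ exists j, 1 <= j <= m /\ Iset xi delta mu (m - j) y /\
                     dist (Gtil xi delta mu m) y x j.

Definition kr_set xi delta mu (n : nat) (x y : lab) : Prop :=
  Iset xi delta mu (n - 1) y /\
  (forall z, ~ (alpha xi delta mu (n - 1) 1 y z /\ alpha xi delta mu n 2 x z)) /\
  dist (proc xi delta mu n) x y 3.

(* Main.v *)
Require Import Defs.
From Stdlib Require Import Reals Arith List Relations Lia Classical.
Import ListNotations.

Lemma clos_iff_lvl (mu : lab -> lab -> bool) Gt n u w :
  clos_refl_sym_trans lab (msimG mu Gt n) u w -> (lvl Gt n u <-> lvl Gt n w).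
Proof.
  induction 1 as [x y H| x | x y _ IH | x y z _ IH1 _ IH2].
  - destruct H as [H1 [H2 _]]; tauto.
  - tauto.
  - tauto.
  - tauto.
Qed.

Lemma is_pi_lvl mu Gt n u w : is_pi mu Gt n u w -> lvl Gt n u -> lvl Gt n w.
Proof. intros [H _] Hu. apply (clos_iff_lvl mu Gt n u w H); auto. Qed.

Lemma sub1 m : S m - 1 = m.
Proof. lia. Qed.

Lemma len_V xi delta mu m x : gV (proc xi delta mu m) x -> length x <= m.
Proof.
  revert x; induction m; intros x H.
  - simpl in H. subst. simpl. lia.
  - simpl in H. destruct H as [H | [u [Hu Hpi]]].
    + apply IHm in H. lia.
    + apply is_pi_lvl in Hpi; auto. destruct Hpi as [_ Hl]. lia.
Qed.

Lemma tildeV_leaf xi delta mu m u :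
  lvl (tilde xi delta (proc xi delta mu m) m) (S m) u ->
  exists p i, lvl (proc xi delta mu m) m p /\ Cset xi delta (proc xi delta mu m) p i /\ u = p ++ [i].
Proof.
  intros [[H | H] Hl].
  - apply len_V in H. lia.
  - exact H.
Qed.

Lemma leaf_lvl xi delta mu m p i :
  lvl (proc xi delta mu m) m p -> Cset xi delta (proc xi delta mu m) p i ->
  lvl (tilde xi delta (proc xi delta mu m) m) (S m) (p ++ [i]).
Proof.
  intros Hp Hc. split.
  - right. exists p, i. auto.
  - rewrite length_app. destruct Hp as [_ Hp]. simpl. lia.
Qed.

Lemma edge_V xi delta mu m x y : gE (proc xi delta mu m) x y ->
  gV (proc xi delta mu m) x /\ gV (proc xi delta mu m) y.
Proof.
  revert x y; induction m; intros x y H.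
  - simpl in H. contradiction.
  - simpl in H. destruct H as [H | [v [i [w [Hv [Hc [Hpi Hxy]]]]]]].
    + apply IHm in H. simpl. tauto.
    + rewrite ?sub1, ?Nat.sub_0_r in Hv.
      assert (Hw : gV (proc xi delta mu (S m)) w).
      { simpl. right. exists (v ++ [i]). split; auto. apply leaf_lvl; auto. }
      assert (Hv' : gV (proc xi delta mu (S m)) v).
      { simpl. left. apply Hv. }
      destruct Hxy as [[-> ->] | [-> ->]]; auto.
Qed.

Lemma edge_len xi delta mu m x y : gE (proc xi delta mu m) x y ->
  length y = S (length x) \/ length x = S (length y).
Proof.
  revert x y; induction m; intros x y H.
  - simpl in H. contradiction.
  - simpl in H. destruct H as [H | [v [i [w [Hv [Hc [Hpi Hxy]]]]]]].
    + apply IHm in H. auto.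
    + rewrite ?sub1, ?Nat.sub_0_r in Hv.
      assert (Hw : lvl (tilde xi delta (proc xi delta mu m) m) (S m) w).
      { eapply is_pi_lvl; eauto. apply leaf_lvl; auto. }
      destruct Hw as [_ Hw]. destruct Hv as [_ Hv].
      destruct Hxy as [[-> ->] | [-> ->]]; lia.
Qed.

Lemma edge_sym xi delta mu m x y : gE (proc xi delta mu m) x y -> gE (proc xi delta mu m) y x.
Proof.
  revert x y; induction m; intros x y H.
  - simpl in H. contradiction.
  - simpl in H |- *. destruct H as [H | [v [i [w [Hv [Hc [Hpi Hxy]]]]]]].
    + left. auto.
    + right. exists v, i, w. split; [exact Hv|]. split; [exact Hc|]. split; [exact Hpi|]. tauto.
Qed.

Lemma mono_V xi delta mu m m' x : m <= m' -> gV (proc xi delta mu m) x -> gV (proc xi delta mu m') x.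
Proof. induction 1; auto. intros H0. simpl. left. auto. Qed.

Lemma mono_E xi delta mu m m' x y : m <= m' -> gE (proc xi delta mu m) x y -> gE (proc xi delta mu m') x y.
Proof. induction 1; auto. intros H0. simpl. left. auto. Qed.

Lemma down1_V xi delta mu m x : gV (proc xi delta mu (S m)) x -> length x <= m -> gV (proc xi delta mu m) x.
Proof.
  simpl. intros [H | [u [Hu Hpi]]] Hl; auto.
  apply is_pi_lvl in Hpi; auto. destruct Hpi. lia.
Qed.

Lemma down1_E xi delta mu m x y : gE (proc xi delta mu (S m)) x y -> length x <= m -> length y <= m ->
  gE (proc xi delta mu m) x y.
Proof.
  simpl. intros [H | [v [i [w [Hv [Hc [Hpi Hxy]]]]]]] Hx Hy; auto.
  rewrite ?sub1, ?Nat.sub_0_r in Hv.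
  assert (Hw : lvl (tilde xi delta (proc xi delta mu m) m) (S m) w).
  { eapply is_pi_lvl; eauto. apply leaf_lvl; auto. }
  destruct Hw as [_ Hw]. destruct Hxy as [[-> ->] | [-> ->]]; lia.
Qed.

Lemma down_V xi delta mu d k x : gV (proc xi delta mu (k + d)) x -> length x <= k -> gV (proc xi delta mu k) x.
Proof.
  induction d; intros H Hl.
  - rewrite Nat.add_0_r in H; auto.
  - apply IHd; auto. rewrite Nat.add_succ_r in H. apply down1_V; auto. lia.
Qed.

Lemma down_E xi delta mu d k x y : gE (proc xi delta mu (k + d)) x y -> length x <= k -> length y <= k ->
  gE (proc xi delta mu k) x y.
Proof.
  induction d; intros H Hx Hy.
  - rewrite Nat.add_0_r in H; auto.
  - apply IHd; auto. rewrite Nat.add_succ_r in H. apply down1_E; auto; lia.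
Qed.

Lemma parent_edge xi delta mu m x y : gE (proc xi delta mu (S m)) x y -> length y = S m ->
  exists i, lvl (proc xi delta mu m) m x /\ Cset xi delta (proc xi delta mu m) x i /\
    is_pi mu (tilde xi delta (proc xi delta mu m) m) (S m) (x ++ [i]) y.
Proof.
  intros H Hy. simpl in H. destruct H as [H | [v [i [w [Hv [Hc [Hpi Hxy]]]]]]].
  - apply edge_V in H. destruct H as [_ H]. apply len_V in H. lia.
  - rewrite ?sub1, ?Nat.sub_0_r in Hv. destruct Hxy as [[-> ->] | [-> ->]].
    + exists i. auto.
    + destruct Hv as [_ Hv]. lia.
Qed.

Lemma has_parent xi delta mu m y : lvl (proc xi delta mu (S m)) (S m) y ->
  exists g, gE (proc xi delta mu (S m)) g y /\ lvl (proc xi delta mu m) m g.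
Proof.
  intros [H Hl]. simpl in H. destruct H as [H | [u [Hu Hpi]]].
  - apply len_V in H. lia.
  - destruct (tildeV_leaf _ _ _ _ _ Hu) as [p [i [Hp [Hc ->]]]].
    exists p. split; auto. simpl. right. exists p, i, y. rewrite ?sub1, ?Nat.sub_0_r. split; [exact Hp|]. split; [exact Hc|]. split; [exact Hpi|]. left; auto.
Qed.

Lemma T_edge_len xi delta mu m x y : gE (tilde xi delta (proc xi delta mu m) m) x y ->
  length y = S (length x) \/ length x = S (length y).
Proof.
  simpl. intros [H | [u [i [Hu [Hc Hxy]]]]].
  - eapply edge_len; eauto.
  - destruct Hu as [_ Hu]. destruct Hxy as [[-> ->] | [-> ->]]; rewrite length_app; simpl; lia.
Qed.

Lemma T_edge_sym xi delta mu m x y : gE (tilde xi delta (proc xi delta mu m) m) x y ->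
  gE (tilde xi delta (proc xi delta mu m) m) y x.
Proof.
  simpl. intros [H | [u [i [Hu [Hc Hxy]]]]].
  - left. apply edge_sym; auto.
  - right. exists u, i. split; [exact Hu|]. split; [exact Hc|]. tauto.
Qed.

Lemma T_leaf xi delta mu m x y : gE (tilde xi delta (proc xi delta mu m) m) x y -> length y = S m ->
  exists i, lvl (proc xi delta mu m) m x /\ Cset xi delta (proc xi delta mu m) x i /\ y = x ++ [i].
Proof.
  simpl. intros [H | [u [i [Hu [Hc Hxy]]]]] Hy.
  - apply edge_V in H. destruct H as [_ H]. apply len_V in H. lia.
  - destruct Hxy as [[-> ->] | [-> ->]].
    + exists i. auto.
    + destruct Hu as [_ Hu]. lia.
Qed.

Lemma T_old xi delta mu m x y : gE (tilde xi delta (proc xi delta mu m) m) x y ->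
  length x <= m -> length y <= m -> gE (proc xi delta mu m) x y.
Proof.
  simpl. intros [H | [u [i [Hu [Hc Hxy]]]]] Hx Hy; auto.
  destruct Hu as [_ Hu]. destruct Hxy as [[-> ->] | [-> ->]]; rewrite length_app in *; simpl in *; lia.
Qed.

Lemma walk_len (E : lab -> lab -> Prop) :
  (forall x y, E x y -> length y = S (length x) \/ length x = S (length y)) ->
  forall k x y, walk E k x y -> length y <= length x + k /\ length x <= length y + k.
Proof.
  intros HE k. induction k; intros x y H.
  - simpl in H. subst. lia.
  - destruct H as [w [H1 H2]]. apply IHk in H2. apply HE in H1. lia.
Qed.

Lemma dist_of_walk (G : graph) :
  (forall x y, gE G x y -> length y = S (length x) \/ length x = S (length y)) ->
  forall k x y, walk (gE G) k x y -> length y = length x + k -> Defs.dist G x y k.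
Proof.
  intros HE k x y H Hl. split; auto. intros k' Hk' Hw.
  apply (walk_len _ HE) in Hw. lia.
Qed.

Lemma switch (A : Type) (R : A -> A -> Prop) (I : A -> Prop) x z :
  clos_refl_sym_trans A R x z -> I x -> ~ I z -> exists a b, (R a b \/ R b a) /\ I a /\ ~ I b.
Proof.
  intros H. apply clos_rst_rst1n in H. induction H as [x0 | x0 y z0 Hxy _ IH]; intros Hx Hz.
  - contradiction.
  - destruct (classic (I y)) as [Hy | Hy].
    + apply IH; auto.
    + exists x0, y. auto.
Qed.

Lemma first_step (A : Type) (R : A -> A -> Prop) x z :
  clos_refl_sym_trans A R x z -> x <> z -> exists b, R x b \/ R b x.
Proof.
  intros H. apply clos_rst_rst1n in H. destruct H as [| y z0 Hxy Hr]; intros Hne.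
  - congruence.
  - exists y. auto.
Qed.

Lemma parse xi delta mu m a b :
  msimG mu (tilde xi delta (proc xi delta mu m) m) (S m) a b ->
  exists pa ia pb ib g, a = pa ++ [ia] /\ b = pb ++ [ib] /\
    lvl (proc xi delta mu m) m pa /\ lvl (proc xi delta mu m) m pb /\
    Cset xi delta (proc xi delta mu m) pa ia /\ Cset xi delta (proc xi delta mu m) pb ib /\
    gE (proc xi delta mu m) g pa /\ gE (proc xi delta mu m) g pb /\ S (length g) = m.
Proof.
  intros [[Ha La] [[Hb Lb] [[W Hmin] _]]].
  destruct W as [x1 [E1 [x2 [E2 [x3 [E3 [x4 [E4 W]]]]]]]]. simpl in W. subst x4.
  apply T_edge_sym in E1.
  destruct (T_leaf _ _ _ _ _ _ E1 La) as [ia [Lx1 [Cx1 ->]]].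
  destruct (T_leaf _ _ _ _ _ _ E4 Lb) as [ib [Lx3 [Cx3 ->]]].
  pose proof (T_edge_len _ _ _ _ _ _ E2) as L2.
  destruct Lx1 as [Vx1 Lx1'], Lx3 as [Vx3 Lx3'].
  destruct L2 as [L2 | L2].
  - exfalso.
    destruct (T_leaf _ _ _ _ _ _ E2 ltac:(lia)) as [i1 [_ [_ Ex2]]].
    apply T_edge_sym in E3.
    destruct (T_leaf _ _ _ _ _ _ E3 ltac:(lia)) as [i3 [_ [_ Ex2']]].
    rewrite Ex2 in Ex2'. apply app_inj_tail in Ex2'. destruct Ex2' as [<- _].
    apply (Hmin 2); [lia|].
    exists x1. split.
    + apply T_edge_sym. exact E1.
    + exists (x1 ++ [ib]). split; [exact E4 | reflexivity].
  - exists x1, ia, x3, ib, x2. split; [reflexivity|]. split; [reflexivity|].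
    split; [split; auto|]. split; [split; auto|]. split; [auto|]. split; [auto|].
    split; [|split; [|lia]].
    + apply edge_sym. apply (T_old _ _ _ _ _ _ E2); lia.
    + pose proof (T_edge_len _ _ _ _ _ _ E3). apply (T_old _ _ _ _ _ _ E3); lia.
Qed.

Lemma assemble xi delta mu k v c d pc ic pd id g a b qa ia qb ib h
  (hv : Iset xi delta mu (S (S (S k))) v)
  (Hcd : msimG mu (tilde xi delta (proc xi delta mu (S (S k))) (S (S k))) (S (S (S k))) c d)
  (Ec : c = pc ++ [ic]) (Ed : d = pd ++ [id])
  (Lpc : lvl (proc xi delta mu (S (S k))) (S (S k)) pc)
  (Lpd : lvl (proc xi delta mu (S (S k))) (S (S k)) pd)
  (Cpc : Cset xi delta (proc xi delta mu (S (S k))) pc ic)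
  (Cpd : Cset xi delta (proc xi delta mu (S (S k))) pd id)
  (Egc : gE (proc xi delta mu (S (S k))) g pc)
  (Egd : gE (proc xi delta mu (S (S k))) g pd)
  (Lg : length g = S k)
  (Hg : alpha xi delta mu (S (S (S k))) 2 v g)
  (Hab : msimG mu (tilde xi delta (proc xi delta mu (S k)) (S k)) (S (S k)) a b)
  (Ea : a = qa ++ [ia]) (Eb : b = qb ++ [ib])
  (Lqa : lvl (proc xi delta mu (S k)) (S k) qa)
  (Lqb : lvl (proc xi delta mu (S k)) (S k) qb)
  (Cqa : Cset xi delta (proc xi delta mu (S k)) qa ia)
  (Cqb : Cset xi delta (proc xi delta mu (S k)) qb ib)
  (Eha : gE (proc xi delta mu (S k)) h qa)
  (Ehb : gE (proc xi delta mu (S k)) h qb)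
  (Ehg : gE (proc xi delta mu (S k)) h g)
  (Lh : length h = k) :
  let n := S (S (S k)) in
  exists u, alpha xi delta mu n 3 v u /\
    exists a b c d,
      msim xi delta mu n c d /\
      atilde xi delta mu n c u /\ atilde xi delta mu n d u /\
      ((Itil xi delta mu n a /\ Itil xi delta mu n b /\
        Itil xi delta mu n c /\ Itil xi delta mu n d /\
        msim xi delta mu n a b /\
        atilde xi delta mu n a u /\ atilde xi delta mu n b u /\
        a <> b /\ a <> d /\ b <> d)
       \/
       (Itil xi delta mu (n - 1) a /\ Itil xi delta mu (n - 1) b /\
        Itil xi delta mu n c /\ Itil xi delta mu n d /\
        msim xi delta mu (n - 1) a b /\
        atilde xi delta mu (n - 1) a u /\ atilde xi delta mu (n - 1) b u)).
Proof.
  intros n. subst n.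
  assert (E3 : S (S (S k)) - 3 = k) by lia.
  assert (E12 : S (S (S k)) - 1 - 2 = k) by lia.
  assert (Ih : Iset xi delta mu k h).
  { split; auto. apply edge_V in Eha. destruct Eha as [Vh _].
    apply down1_V; auto. lia. }
  assert (Lv : length v = S (S (S k))) by (destruct hv; auto).
  destruct Hcd as [Lc [Ld Dcd]].
  destruct Hab as [La [Lb Dab]].
  exists h. split.
  { unfold alpha. rewrite E3. split; auto.
    apply dist_of_walk; [intros; eapply edge_len; eauto| |lia].
    exists g. split.
    - apply (mono_E _ _ _ (S k)); auto.
    - destruct Hg as [_ [W _]]. exact W. }
  exists a, b, c, d.
  assert (Tc : forall x px ix, x = px ++ [ix] ->
     lvl (proc xi delta mu (S (S k))) (S (S k)) px ->
     Cset xi delta (proc xi delta mu (S (S k))) px ix ->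
     gE (proc xi delta mu (S (S k))) g px ->
     atilde xi delta mu (S (S (S k))) x h).
  { intros x px ix -> Lpx Cpx Egx. right. exists 3. split; [lia|]. rewrite E3. split; auto.
    change (Gtil xi delta mu (S (S (S k)))) with (tilde xi delta (proc xi delta mu (S (S k))) (S (S k))).
    apply dist_of_walk; [intros; eapply T_edge_len; eauto| |].
    - exists g. split; [left; apply (mono_E _ _ _ (S k)); auto|].
      exists px. split; [left; auto|].
      exists (px ++ [ix]). split; [|reflexivity].
      right. exists px, ix. split; auto.
    - rewrite length_app. destruct Lpx as [_ Lpx]. simpl. lia. }
  assert (Ta : forall x px ix, x = px ++ [ix] ->
     lvl (proc xi delta mu (S k)) (S k) px ->
     Cset xi delta (proc xi delta mu (S k)) px ix ->
     gE (proc xi delta mu (S k)) h px ->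
     atilde xi delta mu (S (S (S k)) - 1) x h).
  { intros x px ix -> Lpx Cpx Epx. right. exists 2. split; [lia|]. rewrite E12. split; auto.
    change (Gtil xi delta mu (S (S (S k)) - 1)) with (tilde xi delta (proc xi delta mu (S k)) (S k)).
    apply dist_of_walk; [intros; eapply T_edge_len; eauto| |].
    - exists px. split; [left; auto|].
      exists (px ++ [ix]). split; [|reflexivity].
      right. exists px, ix. split; auto.
    - rewrite length_app. destruct Lpx as [_ Lpx]. simpl. lia. }
  split; [split; [exact Lc|split; [exact Ld|exact Dcd]]|].
  split; [eapply Tc; eauto|].
  split; [eapply Tc; eauto|].
  right.
  split; [exact La|]. split; [exact Lb|]. split; [exact Lc|]. split; [exact Ld|].
  split; [split; [exact La|split; [exact Lb|exact Dab]]|].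
  split; eapply Ta; eauto.
Qed.

Theorem lemma6p2 (p q : R) (hp : (0 <= p <= 1)%R) (hq : (0 <= q <= 1)%R)
  (xi : lab -> nat) (delta : lab -> lab -> bool) (mu : lab -> lab -> bool)
  (hmu : forall u v, mu u v = mu v u)
  (n : nat) (hn : 3 <= n) (v : lab) (hv : Iset xi delta mu n v)
  (hk : exists y, kr_set xi delta mu n v y) :
  exists u, alpha xi delta mu n 3 v u /\
    exists a b c d,
      msim xi delta mu n c d /\
      atilde xi delta mu n c u /\ atilde xi delta mu n d u /\
      ((Itil xi delta mu n a /\ Itil xi delta mu n b /\
        Itil xi delta mu n c /\ Itil xi delta mu n d /\
        msim xi delta mu n a b /\
        atilde xi delta mu n a u /\ atilde xi delta mu n b u /\
        a <> b /\ a <> d /\ b <> d)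
       \/
       (Itil xi delta mu (n - 1) a /\ Itil xi delta mu (n - 1) b /\
        Itil xi delta mu n c /\ Itil xi delta mu n d /\
        msim xi delta mu (n - 1) a b /\
        atilde xi delta mu (n - 1) a u /\ atilde xi delta mu (n - 1) b u)).
Proof.
  destruct n as [|[|[|k]]]; try lia. clear hn.
  destruct hk as [y [Hy [Hdisj [W _]]]].
  destruct W as [x1 [E1 [x2 [E2 [y' [E3 Wy]]]]]]. simpl in Wy. subst y'.
  assert (Lv : length v = S (S (S k))) by (destruct hv; auto).
  assert (Ly : length y = S (S k)) by (destruct Hy; auto).
  assert (Lx1 : length x1 = S (S k)).
  { destruct (edge_len _ _ _ _ _ _ E1) as [H|H]; [|lia].
    apply edge_V in E1. destruct E1 as [_ V]. apply len_V in V. lia. }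
  assert (HE : forall m x y, gE (proc xi delta mu m) x y -> length y = S (length x) \/ length x = S (length y)).
  { intros; eapply edge_len; eauto. }
  destruct (edge_len _ _ _ _ _ _ E2) as [Lx2 | Lx2].
  2:{ exfalso. apply (Hdisj x2). split.
      - split.
        + split; [|lia]. apply edge_V in E3. destruct E3 as [V _].
          apply down1_V; [|lia]. apply down1_V; [auto|lia].
        + apply dist_of_walk; [apply HE| |lia].
          exists y. split; [|reflexivity]. apply down1_E; auto; lia.
      - split.
        + split; [|lia]. apply edge_V in E3. destruct E3 as [V _].
          apply down1_V; [|lia]. apply down1_V; [auto|lia].
        + apply dist_of_walk; [apply HE| |lia].
          exists x1. split; [apply edge_sym; auto|].
          exists v. split; [apply edge_sym; auto|reflexivity]. }
  destruct (parent_edge _ _ _ _ _ _ E2 ltac:(lia)) as [i [Lx1' [Cx1 Pi1]]].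
  destruct (parent_edge _ _ _ _ _ _ (edge_sym _ _ _ _ _ _ E3) ltac:(lia)) as [j [Ly' [Cy Pi2]]].
  pose proof (rst_trans _ _ _ _ _ (proj1 Pi1) (rst_sym _ _ _ _ (proj1 Pi2))) as Hclos.
  set (I := fun w => forall p0 i0 g, w = p0 ++ [i0] -> gE (proc xi delta mu (S (S k))) g p0 ->
              length g = S k -> alpha xi delta mu (S (S (S k))) 2 v g).
  assert (Alpha2 : forall g px, gE (proc xi delta mu (S (S k))) g px -> length g = S k ->
     gE (proc xi delta mu (S (S (S k)))) px v -> alpha xi delta mu (S (S (S k))) 2 v g).
  { intros g px Eg Lg Epx. split.
    - split; [|exact Lg]. apply edge_V in Eg. destruct Eg as [V _]. apply down1_V; [auto|lia].
    - apply dist_of_walk; [apply HE| |lia].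
      exists px. split; [apply (mono_E _ _ _ (S (S k))); auto|].
      exists v. split; [auto|reflexivity]. }
  assert (I0 : I (x1 ++ [i])).
  { intros p0 i0 g Heq Eg Lg. apply app_inj_tail in Heq. destruct Heq as [<- _].
    apply (Alpha2 g x1); auto. apply edge_sym; auto. }
  assert (I1 : ~ I (y ++ [j])).
  { intros HI. destruct (has_parent xi delta mu (S k) y Hy) as [g [Eg Lg]].
    apply (Hdisj g). split.
    - split; [exact Lg|]. apply dist_of_walk; [apply HE| |destruct Lg; lia].
      exists y. split; [auto|reflexivity].
    - apply (HI y j g eq_refl Eg). destruct Lg; auto. }
  destruct (switch _ _ I _ _ Hclos I0 I1) as [a0 [b0 [Hor [Ia0 Ib0]]]].
  assert (Claim : forall c d, msimG mu (tilde xi delta (proc xi delta mu (S (S k))) (S (S k))) (S (S (S k))) c d ->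
     (I c /\ ~ I d) \/ (I d /\ ~ I c) ->
  exists u, alpha xi delta mu (S (S (S k))) 3 v u /\
    exists a b c d,
      msim xi delta mu (S (S (S k))) c d /\
      atilde xi delta mu (S (S (S k))) c u /\ atilde xi delta mu (S (S (S k))) d u /\
      ((Itil xi delta mu (S (S (S k))) a /\ Itil xi delta mu (S (S (S k))) b /\
        Itil xi delta mu (S (S (S k))) c /\ Itil xi delta mu (S (S (S k))) d /\
        msim xi delta mu (S (S (S k))) a b /\
        atilde xi delta mu (S (S (S k))) a u /\ atilde xi delta mu (S (S (S k))) b u /\
        a <> b /\ a <> d /\ b <> d)
       \/
       (Itil xi delta mu (S (S (S k)) - 1) a /\ Itil xi delta mu (S (S (S k)) - 1) b /\
        Itil xi delta mu (S (S (S k))) c /\ Itil xi delta mu (S (S (S k))) d /\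
        msim xi delta mu (S (S (S k)) - 1) a b /\
        atilde xi delta mu (S (S (S k)) - 1) a u /\ atilde xi delta mu (S (S (S k)) - 1) b u))).
  { intros c d Hcd Hgb.
    destruct (parse _ _ _ _ _ _ Hcd) as [pc [ic [pd [id [g [Ec [Ed [Lpc [Lpd [Cpc [Cpd [Egc [Egd Lg]]]]]]]]]]]]].
    assert (Key : alpha xi delta mu (S (S (S k))) 2 v g /\
       exists a b qa ia qb ib h,
        msimG mu (tilde xi delta (proc xi delta mu (S k)) (S k)) (S (S k)) a b /\
        a = qa ++ [ia] /\ b = qb ++ [ib] /\
        lvl (proc xi delta mu (S k)) (S k) qa /\ lvl (proc xi delta mu (S k)) (S k) qb /\
        Cset xi delta (proc xi delta mu (S k)) qa ia /\ Cset xi delta (proc xi delta mu (S k)) qb ib /\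
        gE (proc xi delta mu (S k)) h qa /\ gE (proc xi delta mu (S k)) h qb /\
        gE (proc xi delta mu (S k)) h g /\ length h = k).
    { assert (Gen : forall pg ig pb ib, I (pg ++ [ig]) -> ~ I (pb ++ [ib]) ->
          gE (proc xi delta mu (S (S k))) g pg -> gE (proc xi delta mu (S (S k))) g pb ->
          lvl (proc xi delta mu (S (S k))) (S (S k)) pb -> False \/ (alpha xi delta mu (S (S (S k))) 2 v g /\
       exists a b qa ia qb ib h,
        msimG mu (tilde xi delta (proc xi delta mu (S k)) (S k)) (S (S k)) a b /\
        a = qa ++ [ia] /\ b = qb ++ [ib] /\
        lvl (proc xi delta mu (S k)) (S k) qa /\ lvl (proc xi delta mu (S k)) (S k) qb /\
        Cset xi delta (proc xi delta mu (S k)) qa ia /\ Cset xi delta (proc xi delta mu (S k)) qb ib /\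
        gE (proc xi delta mu (S k)) h qa /\ gE (proc xi delta mu (S k)) h qb /\
        gE (proc xi delta mu (S k)) h g /\ length h = k)).
      { intros pg ig pb ib Ig Ib Eg Eb Lpb. right.
        assert (Ag : alpha xi delta mu (S (S (S k))) 2 v g) by (apply (Ig pg ig g eq_refl Eg); lia).
        split; [exact Ag|].
        destruct (classic (exists g', gE (proc xi delta mu (S (S k))) g' pb /\ length g' = S k /\
                     ~ alpha xi delta mu (S (S (S k))) 2 v g')) as [[g' [Eg' [Lg' Ng']]] | Hn].
        2:{ exfalso. apply Ib. intros p0 i0 g0 Heq Eg0 Lg0. apply app_inj_tail in Heq. destruct Heq as [<- _].
            apply NNPP. intro Hc. apply Hn. exists g0. auto. }
        assert (Hne : g <> g') by (intro; subst; contradiction).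
        destruct Lpb as [_ Lpb].
        destruct (parent_edge _ _ _ _ _ _ Eb Lpb) as [i1 [Lg1 [Cg1 Pg1]]].
        destruct (parent_edge _ _ _ _ _ _ Eg' Lpb) as [i2 [Lg2 [Cg2 Pg2]]].
        pose proof (rst_trans _ _ _ _ _ (proj1 Pg1) (rst_sym _ _ _ _ (proj1 Pg2))) as Hc2.
        assert (Hne2 : g ++ [i1] <> g' ++ [i2]).
        { intro H. apply app_inj_tail in H. destruct H; contradiction. }
        destruct (first_step _ _ _ _ Hc2 Hne2) as [b1 [Hb1 | Hb1]].
        - destruct (parse _ _ _ _ _ _ Hb1) as [qa [ia [qb [ib' [h [Ea [Eb' [Lqa [Lqb [Cqa [Cqb [Eha [Ehb Lh]]]]]]]]]]]]].
          pose proof Ea as Ea'. apply app_inj_tail in Ea'. destruct Ea' as [<- <-].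
          exists (g ++ [i1]), b1, g, i1, qb, ib', h. repeat (split; auto).
        - destruct (parse _ _ _ _ _ _ Hb1) as [qa [ia [qb [ib' [h [Ea [Eb' [Lqa [Lqb [Cqa [Cqb [Eha [Ehb Lh]]]]]]]]]]]]].
          pose proof Eb' as Eb''. apply app_inj_tail in Eb''. destruct Eb'' as [<- <-].
          exists b1, (g ++ [i1]), qa, ia, g, i1, h. repeat (split; auto). }
      destruct Hgb as [[Ic Id] | [Id Ic]]; subst c d.
      - destruct (Gen pc ic pd id Ic Id Egc Egd Lpd) as [[]|R]; exact R.
      - destruct (Gen pd id pc ic Id Ic Egd Egc Lpc) as [[]|R]; exact R. }
    destruct Key as [Ag [a [b [qa [ia [qb [ib [h [Hab [Ea [Eb [Lqa [Lqb [Cqa [Cqb [Eha [Ehb [Ehg Lh]]]]]]]]]]]]]]]]]].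
    exact (assemble xi delta mu k v c d pc ic pd id g a b qa ia qb ib h hv Hcd Ec Ed Lpc Lpd Cpc Cpd
             Egc Egd ltac:(lia) Ag Hab Ea Eb Lqa Lqb Cqa Cqb Eha Ehb Ehg Lh). }
  destruct Hor as [H | H].
  - apply (Claim a0 b0 H). left; auto.
  - apply (Claim b0 a0 H). right; auto.
Qed.
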